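(* Let $\mathcal{P}$ be the memory erasure protocol described in the context, and let $\pi$ be the projection removing time-stamps, $\pi((t_1,e_1)\cdots(t_n,e_n)) = e_1\cdots e_n$. For every $\bar\tau\in\pi(\mathrm{Tr}(\mathcal{P}))$, all agents $a,b$ and all messages $n,m,c$: if $r = h(k(a,b), n, m, c)$, $\mathrm{claim}_a(\mathrm{erasure}, b, r)$ occurs in $\bar\tau$ and $a\in\mathrm{Honest}$, then there exist indices $i<k<j$ in $\{1,\dots,|\bar\tau|\}$ and an agent $b'$ such that $\bar\tau_i = \mathrm{send}_a(c)$, $\bar\tau_k = \mathrm{send}_{b'}(r)$, $\bar\tau_j = \mathrm{recv}_a(r)$, and either $b' = b$ or $\{b,b'\}\subseteq\mathrm{Dishonest}$.
   Context: Symbolic model. Messages are terms of a term algebra over a signature $\Sigma$, variables and a set of constants $\mathrm{Const}$. The set $\mathrm{Agent}\subseteq\mathrm{Const}$ is partitioned into $\mathrm{Honest}$ and $\mathrm{Dishonest}$; $\mathrm{Nonce}\subseteq\mathrm{Const}$ is partitioned into sets $\mathrm{Nonce}_a$, $a\in\mathrm{Agent}$. $\Sigma$ contains pairing $\langle m,m'\rangle$, symmetric encryption $\{m\}_k$, $k(a,b)$ (long-term shared key of $a,b$), a MAC symbol and a hash symbol $h$. Events: $\mathrm{send}_a(m)$, $\mathrm{recv}_a(m)$, $\mathrm{claim}_a(\psi,m)$, with actor $a$. A trace is a finite sequence of time-stamped events $(t,e)$, $t\in\mathbb{R}$; $\max(\tau)$ is its largest time-stamp. Inference $a\vdash_\tau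 m$ is the least relation closed under: (I1) $a\vdash_\tau m$ for $m\in(\mathrm{Const}\setminus\mathrm{Nonce})\cup\mathrm{Nonce}_a$; (I2) $a\vdash_\tau(k(a,b),k(b,a))$; (I3) closure under all $f\in\Sigma\setminus\{k\}$; (I4) $(t,\mathrm{recv}_a(m))\in\tau$ gives $a\vdash_\tau m$; (I5) unpairing; (I6) from $a\vdash_\tau\{x\}_y$ and $a\vdash_\tau y$ infer $a\vdash_\tau x$. With a distance function $d$ and channel speed $\mathsf{c}$, $\mathrm{Tr}(\mathcal{P})$ is the least set closed under the protocol rules and: (Start) $\epsilon\in\mathrm{Tr}(\mathcal{P})$; (Net) if $\tau\in\mathrm{Tr}(\mathcal{P})$, $(t,\mathrm{send}_a(m))\in\tau$, $t'\ge\max(\tau)$, $d(a,b)\le\frac{\mathsf{c}}{2}(t'-t)$ then $\tau\cdot(t',\mathrm{recv}_b(m))\in\mathrm{Tr}(\mathcal{P})$; (Adv) if $\tau\in\mathrm{Tr}(\mathcal{P})$, $a\in\mathrm{Dishonest}$, $t\ge\max(\tau)$, $a\vdash_\tau m$ then $\tau\cdot(t,\mathrm{send}_a(m))\in\mathrm{Tr}(\mathcal{P})$. Freshly chosen nonces are assumed not to occur earlier in the trace. The protocol $\mathcal{P}$ (honest prover $P$, honest verifier $V$, shared key $k=k(V,P)$, time bound parameter $\Delta$): $P$ sends a fresh nonce $N_P\in\mathrm{Nonce}_P$; upon receiving $N_P$, $V$ chooses a fresh $N_V\in\mathrm{Nonce}_V$ and sends $N_V$ together with a MAC under $k$ of $(N_P,N_V)$;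 $P$, upon receiving a correct MAC, accepts; $V$ then sends a fresh challenge nonce $C$ at time $t_0$; upon receiving $C$, $P$ sends $r=h(k,N_P,N_V,C)$; upon receiving $r$ at time $t_1$ with $t_1-t_0\le\Delta$ and $r=h(k(V,P),N_P,N_V,C)$, $V$ emits $\mathrm{claim}_V(\mathrm{erasure},P,r)$. *)

(* Defs.v *)
From Stdlib Require Import Reals List.
Import ListNotations.
Open Scope R_scope.

Definition Agent := nat.

Inductive Msg : Type :=
| MVar   : nat -> Msg
| MAgent : Agent -> Msg
| MNonce : Agent -> nat -> Msg     (* MNonce a i ∈ Nonce_a  (Nonce ⊆ Const) *)
| MConst : nat -> Msg
| MPair  : Msg -> Msg -> Msg
| MEnc   : Msg -> Msg -> Msg       (* MEnc m k = {m}_k *)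
| MKey   : Msg -> Msg -> Msg
| MMac   : Msg -> Msg -> Msg       (* MMac k m = MAC of m under key k *)
| MHash  : Msg -> Msg.

Definition key (a b : Agent) : Msg := MKey (MAgent a) (MAgent b).

Definition h4 (x1 x2 x3 x4 : Msg) : Msg :=
  MHash (MPair x1 (MPair x2 (MPair x3 x4))).

Inductive subterm (s : Msg) : Msg -> Prop :=
| st_refl : subterm s s
| st_pair_l : forall x y, subterm s x -> subterm s (MPair x y)
| st_pair_r : forall x y, subterm s y -> subterm s (MPair x y)
| st_enc_l : forall x y, subterm s x -> subterm s (MEnc x y)
| st_enc_r : forall x y, subterm s y -> subterm s (MEnc x y)
| st_key_l : forall x y, subterm s x -> subterm s (MKey x y)
| st_key_r : forall x y, subterm s y -> subterm s (MKey x y)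
| st_mac_l : forall x y, subterm s x -> subterm s (MMac x y)
| st_mac_r : forall x y, subterm s y -> subterm s (MMac x y)
| st_hash : forall x, subterm s x -> subterm s (MHash x).

Inductive ClaimLabel : Type := Erasure.

Inductive Event : Type :=
| Send  : Agent -> Msg -> Event
| Recv  : Agent -> Msg -> Event
| Claim : Agent -> ClaimLabel -> Msg -> Event.

Definition event_msg (e : Event) : Msg :=
  match e with Send _ m | Recv _ m | Claim _ _ m => m end.

(** timed traces, in chronological order (τ · e  is  τ ++ [e]) *)
Definition Trace := list (R * Event).

Definition ge_max (t : R) (tau : Trace) : Prop :=
  forall t0 e, In (t0, e) tau -> t0 <= t.

Definition fresh (n : Msg) (tau : Trace) : Prop :=
  forall te, In te tau -> ~ subterm n (event_msg (snd te)).

Inductive derives (a : Agent) (tau : Trace) : Msg -> Prop :=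
| I1_agent : forall b, derives a tau (MAgent b)
| I1_const : forall n, derives a tau (MConst n)
| I1_nonce : forall i, derives a tau (MNonce a i)
| I2_key1  : forall b, derives a tau (key a b)
| I2_key2  : forall b, derives a tau (key b a)
| I3_pair  : forall x y, derives a tau x -> derives a tau y -> derives a tau (MPair x y)
| I3_enc   : forall x y, derives a tau x -> derives a tau y -> derives a tau (MEnc x y)
| I3_mac   : forall x y, derives a tau x -> derives a tau y -> derives a tau (MMac x y)
| I3_hash  : forall x, derives a tau x -> derives a tau (MHash x)
| I4_recv  : forall t m, In (t, Recv a m) tau -> derives a tau m
| I5_fst   : forall x y, derives a tau (MPair x y) -> derives a tau x
| I5_snd   : forall x y, derives a tau (MPair x y) -> derives a tau y
| I6_dec   : forall x y, derives a tau (MEnc x y) -> derives a tau y -> derives a tau x.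

(** Local states of protocol threads.  The last [nat] field records the
   position in the trace at which the thread may continue (messages it
   reacts to must be received at or after this position). *)
Inductive Thread : Type :=
  (* prover P (with verifier V) has sent N_P, waits for the MAC *)
| PWait (P V : Agent) (NP : Msg) (pos : nat)
  (* prover P has accepted the MAC, waits for the challenge *)
| PAcc (P V : Agent) (NP NV : Msg) (pos : nat)
  (* verifier V (with prover P) has sent N_V and the MAC, will send C *)
| VWait (V P : Agent) (NP NV : Msg) (pos : nat)
  (* verifier V has sent the challenge C at time t0, waits for r *)
| VChal (V P : Agent) (NP NV C : Msg) (t0 : R) (pos : nat).

Section Semantics.
Variables (Honest : Agent -> Prop) (d : Agent -> Agent -> R) (c Delta : R).

Inductive Reach : Trace -> list Thread -> Prop :=
| R_start : Reach [] []
| R_P1 : forall tau th P V i t,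
    Reach tau th -> ge_max t tau -> fresh (MNonce P i) tau ->
    Reach (tau ++ [(t, Send P (MNonce P i))])
          (PWait P V (MNonce P i) (S (length tau)) :: th)
| R_V1 : forall tau th V P idx t1 NP j t,
    Reach tau th -> nth_error tau idx = Some (t1, Recv V NP) ->
    ge_max t tau -> fresh (MNonce V j) tau ->
    Reach (tau ++ [(t, Send V (MPair (MNonce V j)
                                     (MMac (key V P) (MPair NP (MNonce V j)))))])
          (VWait V P NP (MNonce V j) (S (length tau)) :: th)
| R_P2 : forall tau th1 th2 P V NP pos idx t1 NV,
    Reach tau (th1 ++ PWait P V NP pos :: th2) ->
    (pos <= idx)%nat ->
    nth_error tau idx = Some (t1, Recv P (MPair NV (MMac (key V P) (MPair NP NV)))) ->
    Reach tau (th1 ++ PAcc P V NP NV (S idx) :: th2)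
| R_V2 : forall tau th1 th2 V P NP NV pos j t0,
    Reach tau (th1 ++ VWait V P NP NV pos :: th2) ->
    ge_max t0 tau -> fresh (MNonce V j) tau ->
    Reach (tau ++ [(t0, Send V (MNonce V j))])
          (th1 ++ VChal V P NP NV (MNonce V j) t0 (S (length tau)) :: th2)
| R_P3 : forall tau th1 th2 P V NP NV pos idx t1 C t,
    Reach tau (th1 ++ PAcc P V NP NV pos :: th2) ->
    (pos <= idx)%nat ->
    nth_error tau idx = Some (t1, Recv P C) ->
    ge_max t tau ->
    Reach (tau ++ [(t, Send P (h4 (key V P) NP NV C))]) (th1 ++ th2)
| R_V3 : forall tau th1 th2 V P NP NV C t0 pos idx t1 r t,
    Reach tau (th1 ++ VChal V P NP NV C t0 pos :: th2) ->
    (pos <= idx)%nat ->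
    nth_error tau idx = Some (t1, Recv V r) ->
    t1 - t0 <= Delta ->
    r = h4 (key V P) NP NV C ->
    ge_max t tau ->
    Reach (tau ++ [(t, Claim V Erasure (MPair (MAgent P) r))]) (th1 ++ th2)
| R_Net : forall tau th t a m t' b,
    Reach tau th -> In (t, Send a m) tau -> ge_max t' tau ->
    d a b <= c / 2 * (t' - t) ->
    Reach (tau ++ [(t', Recv b m)]) th
| R_Adv : forall tau th a t m,
    Reach tau th -> ~ Honest a -> ge_max t tau -> derives a tau m ->
    Reach (tau ++ [(t, Send a m)]) th.

Definition Tr (tau : Trace) : Prop := exists th, Reach tau th.

End Semantics.

Definition proj (tau : Trace) : list Event := map snd tau.

(* Main.v *)
Require Import Defs.
From Stdlib Require Import Reals List Lia Classical.
Import ListNotations.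
Open Scope R_scope.

Inductive acc (s : Msg) : Msg -> Prop :=
| acc_refl : acc s s
| acc_pl : forall x y, acc s x -> acc s (MPair x y)
| acc_pr : forall x y, acc s y -> acc s (MPair x y)
| acc_enc : forall x y, acc s x -> acc s (MEnc x y).

Lemma derives_key : forall x tau m, derives x tau m ->
  forall a' b', acc (key a' b') m -> x = a' \/ x = b' \/
    exists t m', In (t, Recv x m') tau /\ acc (key a' b') m'.
Proof.
  intros x tau m H; induction H; intros a' b' Ha; unfold key in *;
    try (inversion Ha; subst; eauto 6; fail).
  all: try (right; right; eauto; fail).
  all: match goal with
       | IH : forall a' b', acc _ ?M -> _ |- _ =>
           apply IH; solve [apply acc_pl; auto | apply acc_pr; auto | apply acc_enc; auto]
       end.
Qed.

Lemma sub_base_agent : forall s u, subterm s (MAgent u) -> s = MAgent u.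
Proof. intros s u H; inversion H; auto. Qed.

Lemma derives_sub : forall x tau m, derives x tau m -> forall s, subterm s m ->
  (exists t m', In (t, Recv x m') tau /\ subterm s m') \/
  (derives x tau s /\ forall p, s = MHash p -> derives x tau p).
Proof.
  intros x tau m H; induction H; intros s Hs.
  - apply sub_base_agent in Hs; subst; right; split; [constructor| intros; discriminate].
  - inversion Hs; subst; right; split; [constructor| intros; discriminate].
  - inversion Hs; subst; right; split; [constructor| intros; discriminate].
  - unfold key in Hs; inversion Hs; subst.
    + right; split; [apply I2_key1| intros; discriminate].
    + apply sub_base_agent in H0; subst; right; split; [constructor| intros; discriminate].
    + apply sub_base_agent in H0; subst; right; split; [constructor| intros; discriminate].
  - unfold key in Hs; inversion Hs; subst.
    + right; split; [apply I2_key2| intros; discriminate].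
    + apply sub_base_agent in H0; subst; right; split; [constructor| intros; discriminate].
    + apply sub_base_agent in H0; subst; right; split; [constructor| intros; discriminate].
  - inversion Hs; subst; auto.
    right; split; [constructor; auto| intros; discriminate].
  - inversion Hs; subst; auto.
    right; split; [constructor; auto| intros; discriminate].
  - inversion Hs; subst; auto.
    right; split; [constructor; auto| intros; discriminate].
  - inversion Hs; subst; auto.
    right; split; [constructor; auto| intros p Hp; injection Hp; intros; subst; auto].
  - left; eauto.
  - apply IHderives; apply st_pair_l; auto.
  - apply IHderives; apply st_pair_r; auto.
  - apply IHderives1; apply st_enc_l; auto.
Qed.

Lemma subterm_trans : forall s m m', subterm s m -> subterm m m' -> subterm s m'.
Proof. intros s m m' H1 H2; induction H2; auto; solve [econstructor; eauto | econstructor 3; eauto | econstructor 5; eauto | econstructor 7; eauto | econstructor 9; eauto]. Qed.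

Definition recv_ok (tau : Trace) := forall idx t y m,
  nth_error tau idx = Some (t, Recv y m) ->
  exists p t' y', (p < idx)%nat /\ nth_error tau p = Some (t', Send y' m).

Definition thr_ok (tau : Trace) (th : list Thread) := forall T, In T th ->
  match T with
  | PWait P V NP pos => exists i, NP = MNonce P i
  | PAcc P V NP NV pos => (exists i, NP = MNonce P i) /\
      exists idx t1 X, nth_error tau idx = Some (t1, Recv P X) /\ subterm NV X
  | VWait _ _ _ _ _ => True
  | VChal V P NP NV C t0 pos => exists i tt, pos = S i /\
      nth_error tau i = Some (tt, Send V C) /\ (exists jj, C = MNonce V jj) /\
      forall q te, (q < i)%nat -> nth_error tau q = Some te ->
        ~ subterm C (event_msg (snd te))
  end.

Definition claim_ok (tau : Trace) := forall p t V P r,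
  nth_error tau p = Some (t, Claim V Erasure (MPair (MAgent P) r)) ->
  exists NP NV C i j t2 t3, r = h4 (key V P) NP NV C /\ (i < j)%nat /\
    nth_error tau i = Some (t2, Send V C) /\ nth_error tau j = Some (t3, Recv V r) /\
    (exists jj, C = MNonce V jj) /\
    forall q te, (q < i)%nat -> nth_error tau q = Some te ->
      ~ subterm C (event_msg (snd te)).

Lemma nth_app_old : forall (tau : Trace) l q x,
  nth_error tau q = Some x -> nth_error (tau ++ l) q = Some x.
Proof.
  intros. rewrite nth_error_app1; auto. apply nth_error_Some. congruence.
Qed.

Lemma nth_app_inv : forall (tau : Trace) e q x,
  nth_error (tau ++ [e]) q = Some x ->
  (nth_error tau q = Some x /\ (q < length tau)%nat) \/ (q = length tau /\ x = e).
Proof.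
  intros tau e q x H.
  destruct (Nat.lt_ge_cases q (length tau)).
  - left. rewrite nth_error_app1 in H; auto.
  - right. rewrite nth_error_app2 in H; auto.
    destruct (q - length tau)%nat eqn:E.
    + simpl in H. split; [lia| congruence].
    + simpl in H. destruct n; discriminate.
Qed.

Lemma nth_app_new : forall (tau : Trace) e, nth_error (tau ++ [e]) (length tau) = Some e.
Proof. intros. rewrite nth_error_app2; auto. rewrite Nat.sub_diag. reflexivity. Qed.

Lemma nth_lt : forall (tau : Trace) q x, nth_error tau q = Some x -> (q < length tau)%nat.
Proof. intros. apply nth_error_Some. congruence. Qed.

Lemma in_thr : forall (T X Y : Thread) th1 th2,
  In T (th1 ++ Y :: th2) -> T = Y \/ In T (th1 ++ X :: th2).
Proof.
  intros. apply in_app_or in H. destruct H as [H|[H|H]]; auto;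
  right; apply in_or_app; simpl; auto.
Qed.

Lemma in_thr2 : forall (T X : Thread) th1 th2,
  In T (th1 ++ th2) -> In T (th1 ++ X :: th2).
Proof.
  intros. apply in_app_or in H. destruct H as [H|H];
  apply in_or_app; simpl; auto.
Qed.

Lemma in_thr3 : forall (X : Thread) th1 th2, In X (th1 ++ X :: th2).
Proof. intros. apply in_or_app; simpl; auto. Qed.

Lemma recv_ok_app : forall (tau : Trace) (e : R * Event), recv_ok tau ->
  (forall t y m, e = (t, Recv y m) -> exists p t' y', (p < length tau)%nat /\
     nth_error tau p = Some (t', Send y' m)) -> recv_ok (tau ++ [e]).
Proof.
  intros tau e H1 H2 idx t y m Hn.
  apply nth_app_inv in Hn. destruct Hn as [[Hn Hl]|[-> He]]; [|subst e].
  - destruct (H1 _ _ _ _ Hn) as (p & t' & y' & Hp & Hq).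
    exists p, t', y'; split; auto. apply nth_app_old; auto.
  - destruct (H2 t y m eq_refl) as (p & t' & y' & Hp & Hq).
    exists p, t', y'; split; auto. apply nth_app_old; auto.
Qed.

Lemma thr_one_app : forall (tau : Trace) (e : R * Event) T, (match T with
  | PWait P V NP pos => exists i, NP = MNonce P i
  | PAcc P V NP NV pos => (exists i, NP = MNonce P i) /\
      exists idx t1 X, nth_error tau idx = Some (t1, Recv P X) /\ subterm NV X
  | VWait _ _ _ _ _ => True
  | VChal V P NP NV C t0 pos => exists i tt, pos = S i /\
      nth_error tau i = Some (tt, Send V C) /\ (exists jj, C = MNonce V jj) /\
      forall q te, (q < i)%nat -> nth_error tau q = Some te ->
        ~ subterm C (event_msg (snd te))
  end) -> (match T with
  | PWait P V NP pos => exists i, NP = MNonce P i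
  | PAcc P V NP NV pos => (exists i, NP = MNonce P i) /\
      exists idx t1 X, nth_error (tau ++ [e]) idx = Some (t1, Recv P X) /\ subterm NV X
  | VWait _ _ _ _ _ => True
  | VChal V P NP NV C t0 pos => exists i tt, pos = S i /\
      nth_error (tau ++ [e]) i = Some (tt, Send V C) /\ (exists jj, C = MNonce V jj) /\
      forall q te, (q < i)%nat -> nth_error (tau ++ [e]) q = Some te ->
        ~ subterm C (event_msg (snd te))
  end).
Proof.
  intros tau e T H; destruct T; auto.
  - destruct H as [H1 (idx & t1 & X & H2 & H3)]; split; auto.
    exists idx, t1, X; split; auto; apply nth_app_old; auto.
  - destruct H as (i & tt & H1 & H2 & H3 & H4). exists i, tt; repeat split; auto.
    + apply nth_app_old; auto.
    + intros q te Hq Hte. apply nth_app_inv in Hte.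
      destruct Hte as [[Hte _]|[-> _]]; eauto.
      apply nth_lt in H2; lia.
Qed.

Lemma thr_ok_app : forall (tau : Trace) (e : R * Event) th, thr_ok tau th -> thr_ok (tau ++ [e]) th.
Proof. intros tau e th H T HT. apply thr_one_app. apply H; auto. Qed.

Lemma claim_ok_app : forall (tau : Trace) (e : R * Event), claim_ok tau ->
  (forall t V P r, e = (t, Claim V Erasure (MPair (MAgent P) r)) ->
    exists NP NV C i j t2 t3, r = h4 (key V P) NP NV C /\ (i < j)%nat /\
    nth_error tau i = Some (t2, Send V C) /\ nth_error tau j = Some (t3, Recv V r) /\
    (exists jj, C = MNonce V jj) /\
    forall q te, (q < i)%nat -> nth_error tau q = Some te ->
      ~ subterm C (event_msg (snd te))) -> claim_ok (tau ++ [e]).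
Proof.
  intros tau e H1 H2 p t V P r Hn.
  apply nth_app_inv in Hn. destruct Hn as [[Hn Hl]|[-> He]]; [|subst e].
  - destruct (H1 _ _ _ _ _ Hn) as (NP & NV & C & i & j & t2 & t3 & A1 & A2 & A3 & A4 & A5 & A6).
    exists NP, NV, C, i, j, t2, t3; repeat split; auto; try apply nth_app_old; auto.
    intros q te Hq Hte. apply nth_app_inv in Hte.
    destruct Hte as [[Hte _]|[-> _]]; eauto.
    apply nth_lt in A3; lia.
  - destruct (H2 t V P r eq_refl) as (NP & NV & C & i & j & t2 & t3 & A1 & A2 & A3 & A4 & A5 & A6).
    exists NP, NV, C, i, j, t2, t3; repeat split; auto; try apply nth_app_old; auto.
    intros q te Hq Hte. apply nth_app_inv in Hte.
    destruct Hte as [[Hte _]|[-> _]]; eauto.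
    apply nth_lt in A3; lia.
Qed.

Ltac noclaim := intros ? ? ? ? Heq; discriminate.
Ltac norecv := intros ? ? ? Heq; discriminate.

Section Inv.
Variables (Honest : Agent -> Prop) (d : Agent -> Agent -> R) (c Delta : R).

Lemma fresh_nth : forall n tau q te, fresh n tau -> nth_error tau q = Some te ->
  ~ subterm n (event_msg (snd te)).
Proof. intros. apply H. eapply nth_error_In; eauto. Qed.

Lemma inv_all : forall tau th, Reach Honest d c Delta tau th ->
  recv_ok tau /\ thr_ok tau th /\ claim_ok tau.
Proof.
  intros tau th H; induction H as
    [ | tau th P V i t HR IH Hge Hfr
      | tau th V P idx t1 NP j t HR IH Hn Hge Hfr
      | tau th1 th2 P V NP pos idx t1 NV HR IH Hle Hn
      | tau th1 th2 V P NP NV pos j t0 HR IH Hge Hfr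
      | tau th1 th2 P V NP NV pos idx t1 C t HR IH Hle Hn Hge
      | tau th1 th2 V P NP NV C t0 pos idx t1 r t HR IH Hle Hn Hd Hr Hge
      | tau th t a m t' b HR IH Hin Hge Hd
      | tau th a t m HR IH Hh Hge Hder ].
  - split; [|split].
    + intros idx ? ? ? Hn; destruct idx; discriminate.
    + intros T [].
    + intros p ? ? ? ? Hn; destruct p; discriminate.
  - destruct IH as (IR & IT & IC). split; [|split].
    + apply recv_ok_app; auto; norecv.
    + intros T [<-|HT]; [eauto| apply thr_one_app; apply IT; auto].
    + apply claim_ok_app; auto; noclaim.
  - destruct IH as (IR & IT & IC). split; [|split].
    + apply recv_ok_app; auto; norecv.
    + intros T [<-|HT]; [exact I| apply thr_one_app; apply IT; auto].
    + apply claim_ok_app; auto; noclaim.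
  - destruct IH as (IR & IT & IC). split; [|split]; auto.
    intros T HT. destruct (in_thr T (PWait P V NP pos) _ _ _ HT) as [->|HT'].
    + specialize (IT _ (in_thr3 _ _ _)). simpl in IT. split; auto.
      exists idx, t1, (MPair NV (MMac (key V P) (MPair NP NV))). split; auto.
      apply st_pair_l; constructor.
    + apply IT; auto.
  - destruct IH as (IR & IT & IC). split; [|split].
    + apply recv_ok_app; auto; norecv.
    + intros T HT. destruct (in_thr T (VWait V P NP NV pos) _ _ _ HT) as [->|HT'].
      * exists (length tau), t0; repeat split; eauto using nth_app_new.
        intros q te Hq Hte. apply nth_app_inv in Hte.
        destruct Hte as [[Hte _]|[-> _]]; [|lia]. eapply fresh_nth; eauto.
      * apply thr_one_app; apply IT; auto.
    + apply claim_ok_app; auto; noclaim.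
  - destruct IH as (IR & IT & IC). split; [|split].
    + apply recv_ok_app; auto; norecv.
    + apply thr_ok_app. intros T HT. apply IT. apply in_thr2; auto.
    + apply claim_ok_app; auto; noclaim.
  - destruct IH as (IR & IT & IC). split; [|split].
    + apply recv_ok_app; auto; norecv.
    + apply thr_ok_app. intros T HT. apply IT. apply in_thr2; auto.
    + apply claim_ok_app; auto.
      intros t2 V' P' r' Heq. injection Heq; intros; subst.
      specialize (IT _ (in_thr3 _ _ _)). simpl in IT.
      destruct IT as (i & tt & -> & A2 & A3 & A4).
      exists NP, NV, C, i, idx, tt, t1; repeat split; auto.
  - destruct IH as (IR & IT & IC). split; [|split].
    + apply recv_ok_app; auto.
      intros t0 y m0 Heq; injection Heq; intros; subst.
      apply In_nth_error in Hin. destruct Hin as [p Hp].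
      exists p, t, a; split; auto. eapply nth_lt; eauto.
    + apply thr_ok_app; auto.
    + apply claim_ok_app; auto; noclaim.
  - destruct IH as (IR & IT & IC). split; [|split].
    + apply recv_ok_app; auto; norecv.
    + apply thr_ok_app; auto.
    + apply claim_ok_app; auto; noclaim.
Qed.
End Inv.

Section Sec.
Variables (Honest : Agent -> Prop) (d : Agent -> Agent -> R) (c Delta : R).

Lemma recv_in : forall tau, recv_ok tau -> forall t y m, In (t, Recv y m) tau ->
  exists t' y', In (t', Send y' m) tau.
Proof.
  intros tau H t y m Hi. apply In_nth_error in Hi. destruct Hi as [p Hp].
  destruct (H _ _ _ _ Hp) as (q & t' & y' & _ & Hq).
  exists t', y'. eapply nth_error_In; eauto.
Qed.

Lemma in_app1 : forall (tau : Trace) e x, In x (tau ++ [e]) -> In x tau \/ x = e.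
Proof. intros. apply in_app_or in H. destruct H as [H|[H|[]]]; auto. Qed.

Ltac acc_inv H := inversion H; subst; clear H.

Lemma key_secret : forall a b, Honest a -> Honest b ->
  forall tau th, Reach Honest d c Delta tau th ->
  forall t y m, In (t, Send y m) tau -> ~ acc (key a b) m.
Proof.
  intros a b Ha Hb tau th H.
  induction H; intros tt yy mm Hi Hacc; try (eapply IHReach; eauto; fail);
    try (apply in_app1 in Hi; destruct Hi as [Hi| Hi];
         [eapply IHReach; eauto | injection Hi; intros; subst]); unfold key, h4 in *.
  all: try (inversion Hacc; fail). all: try congruence.
  - destruct Hi.
  - inversion Hacc; subst; clear Hacc; match goal with HH : acc _ _ |- _ => inversion HH end.
  - pose proof (inv_all _ _ _ _ _ _ H) as (IR & _ & _).
    destruct (derives_key _ _ _ H2 _ _ Hacc) as [->|[->|(t2 & m2 & Hr & Hacc2)]].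
    + contradiction.
    + contradiction.
    + destruct (recv_in _ IR _ _ _ Hr) as (t3 & y3 & Hs).
      eapply IHReach; eauto.
Qed.

Lemma hash_sender : forall tau th, Reach Honest d c Delta tau th ->
  forall t y a' b' z, In (t, Send y (MHash (MPair (key a' b') z))) tau ->
  y = b' \/ ~ Honest y.
Proof.
  intros tau th H.
  induction H; intros tt yy a' b' z Hi; try (eapply IHReach; eauto; fail);
    try (apply in_app1 in Hi; destruct Hi as [Hi| Hi];
         [eapply IHReach; eauto | injection Hi; intros; subst]); unfold key, h4 in *.
  all: try congruence.
  all: try (right; assumption).
  all: try (left; reflexivity). all: try (destruct Hi; fail).
Qed.

Lemma sub_hash_agent : forall X u, subterm (MHash X) (MAgent u) -> False.
Proof. intros X u H; inversion H. Qed.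
Lemma sub_hash_nonce : forall X u i, subterm (MHash X) (MNonce u i) -> False.
Proof. intros X u i H; inversion H. Qed.
Lemma sub_hash_key : forall X u v, subterm (MHash X) (key u v) -> False.
Proof.
  intros X u v H; unfold key in H; inversion H; subst; eapply sub_hash_agent; eauto.
Qed.

Lemma via_recv : forall (tau : Trace) (e : R * Event) r0 b,
  recv_ok tau ->
  (forall p t y m, nth_error tau p = Some (t, Send y m) -> subterm r0 m ->
     exists q t', (q <= p)%nat /\ nth_error tau q = Some (t', Send b r0)) ->
  forall idx t1 y X, nth_error tau idx = Some (t1, Recv y X) -> subterm r0 X ->
  exists q t', (q <= length tau)%nat /\ nth_error (tau ++ [e]) q = Some (t', Send b r0).
Proof.
  intros tau e r0 b IR IH idx t1 y X Hn Hs.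
  destruct (IR _ _ _ _ Hn) as (p & tp & yp & Hp & Hpn).
  destruct (IH _ _ _ _ Hpn Hs) as (q & tq & Hq & Hqn).
  apply nth_lt in Hn.
  exists q, tq; split; [lia| apply nth_app_old; auto].
Qed.

Ltac fin := solve [ exfalso; eapply sub_hash_nonce; eauto | exfalso; eapply sub_hash_key; eauto
                  | exfalso; eapply sub_hash_agent; eauto ].

Lemma hash_origin : forall a b, Honest a -> Honest b ->
  forall tau th, Reach Honest d c Delta tau th ->
  forall z p t y m, nth_error tau p = Some (t, Send y m) ->
  subterm (MHash (MPair (key a b) z)) m ->
  exists q t', (q <= p)%nat /\
     nth_error tau q = Some (t', Send b (MHash (MPair (key a b) z))).
Proof.
  intros a b Ha Hb tau th H.
  induction H; intros z pp tt yy mm Hn Hs.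
  all: try (destruct pp; discriminate).
  all: try (eapply IHReach; eauto; fail).
  all: apply nth_app_inv in Hn; destruct Hn as [[Hn Hl]|[-> Hn]];
    [ destruct (IHReach _ _ _ _ _ Hn Hs) as (q & tq & Hq1 & Hq2);
        exists q, tq; split; [lia| apply nth_app_old; auto] | ].
  all: try congruence.
  all: injection Hn; intros; subst.
  - fin.
  - pose proof (inv_all _ _ _ _ _ _ H) as (IR & _ & _).
    inversion Hs; subst; try fin.
    match goal with HH : subterm _ (MMac _ _) |- _ => inversion HH; subst; try fin end.
    match goal with HH : subterm _ (MPair NP _) |- _ => inversion HH; subst; try fin end.
    eapply via_recv; eauto.
  - fin.
  - pose proof (inv_all _ _ _ _ _ _ H) as (IR & IT & _).
    specialize (IT _ (in_thr3 _ _ _)). simpl in IT.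
    destruct IT as [[i0 ->] (idx' & t1' & X & HX & HsX)].
    unfold h4 in Hs. inversion Hs; subst.
    + unfold key in *. exists (length tau), t; split; auto. rewrite nth_app_new.
      reflexivity.
    + match goal with HH : subterm _ (MPair _ _) |- _ => inversion HH; subst; try fin; clear HH end.
      match goal with HH : subterm _ (MPair (MNonce _ _) _) |- _ => inversion HH; subst; try fin; clear HH end.
      match goal with HH : subterm _ (MPair NV C) |- _ => inversion HH; subst; try fin; clear HH end.
      * eapply via_recv; eauto. eapply subterm_trans; eauto.
      * exact (via_recv _ _ _ _ IR (IHReach z) _ _ _ _ H1 H5).
  - pose proof (inv_all _ _ _ _ _ _ H) as (IR & _ & _).
    destruct (derives_sub _ _ _ H2 _ Hs) as [(t1 & m1 & Hi & Hs1)|[_ Hd]].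
    + apply In_nth_error in Hi. destruct Hi as [idx Hidx]. eapply via_recv; eauto.
    + specialize (Hd _ eq_refl). apply I5_fst in Hd.
      destruct (derives_key _ _ _ Hd a b (acc_refl _)) as [->|[->|(t2 & m2 & Hr & Hacc2)]];
        try contradiction.
      destruct (recv_in _ IR _ _ _ Hr) as (t3 & y3 & Hs3).
      exfalso; exact (key_secret a b Ha Hb _ _ H _ _ _ Hs3 Hacc2).
Qed.
End Sec.

Lemma sub_C_r : forall k n m C, subterm C (h4 k n m C).
Proof. intros. unfold h4. apply st_hash, st_pair_r, st_pair_r, st_pair_r, st_refl. Qed.

Lemma nth_proj : forall (tau : Trace) i t e, nth_error tau i = Some (t, e) ->
  nth_error (proj tau) i = Some e.
Proof. intros. unfold proj. rewrite nth_error_map, H. reflexivity. Qed.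

Theorem mainTheorem2 :
  forall (Honest : Agent -> Prop) (d : Agent -> Agent -> R) (c Delta : R)
         (trb : list Event),
    (exists tau, Tr Honest d c Delta tau /\ trb = proj tau) ->
    forall (a b : Agent) (n m cc r : Msg),
      r = h4 (key a b) n m cc ->
      In (Claim a Erasure (MPair (MAgent b) r)) trb ->
      Honest a ->
      exists (i k j : nat) (b' : Agent),
        (i < k)%nat /\ (k < j)%nat /\ (j < length trb)%nat /\
        nth_error trb i = Some (Send a cc) /\
        nth_error trb k = Some (Send b' r) /\
        nth_error trb j = Some (Recv a r) /\
        (b' = b \/ (~ Honest b /\ ~ Honest b')).
Proof.
  intros Honest d c Delta trb [tau [[th HR] ->]] a b n m cc r Hr Hin Ha.
  pose proof (inv_all _ _ _ _ _ _ HR) as (IR & IT & IC).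
  unfold proj in Hin. apply in_map_iff in Hin. destruct Hin as [[tc ec] [Hec Hin]].
  simpl in Hec; subst ec.
  apply In_nth_error in Hin. destruct Hin as [p Hp].
  destruct (IC _ _ _ _ _ Hp) as (NP & NV & C & i & j & t2 & t3 & A1 & A2 & A3 & A4 & [jj A5] & A6).
  assert (HC : cc = C).
  { rewrite Hr in A1. unfold h4 in A1. injection A1; intros; congruence. }
  subst cc.
  destruct (IR _ _ _ _ A4) as (k0 & tk & yk & Hk0 & Hk0n).
  assert (Hafter : forall q tq y, nth_error tau q = Some (tq, Send y r) -> (i < q)%nat).
  { intros q tq y Hq. destruct (Nat.lt_trichotomy q i) as [Hlt|[Heq|Hgt]]; auto.
    - exfalso. apply (A6 _ _ Hlt Hq). simpl. rewrite Hr. apply sub_C_r.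
    - subst q. rewrite A3 in Hq. injection Hq; intros HH _. rewrite Hr, A5 in HH. unfold h4 in HH. discriminate. }
  assert (Hj : (j < length tau)%nat) by (eapply nth_lt; eauto).
  assert (Hr' : r = MHash (MPair (key a b) (MPair n (MPair m C)))) by (rewrite Hr; reflexivity).
  destruct (classic (Honest b)) as [Hb|Hb].
  - destruct (hash_origin _ _ _ _ a b Ha Hb _ _ HR (MPair n (MPair m C)) _ _ _ _ Hk0n)
      as (q & tq & Hq & Hqn).
    { rewrite <- Hr'. apply st_refl. }
    exists i, q, j, b. rewrite <- Hr' in Hqn.
    repeat split; eauto using nth_proj.
    + lia.
    + unfold proj; rewrite length_map; auto.
  - pose proof (hash_sender _ _ _ _ _ _ HR tk yk a b (MPair n (MPair m C))) as Hs.
    rewrite <- Hr' in Hs. specialize (Hs (nth_error_In _ _ Hk0n)).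
    exists i, k0, j, yk.
    repeat split; eauto using nth_proj.
    + unfold proj; rewrite length_map; auto.
    + destruct Hs; auto.
Qed.
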